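(* Let $\mathcal{H}$ be a finite-dimensional Hilbert space, let $U_0$ be a unitary operator on $\mathcal{H}$, let $\{p_\omega\}_{\omega\in\Omega}$ be a probability distribution on a finite index set $\Omega$, and for each $\omega\in\Omega$ let $U_\omega$ be a unitary operator on $\mathcal{H}$. Let $\ket{\psi_0}\in\mathcal{H}$ be a unit vector and let $\rho_0$ be a density operator on $\mathcal{H}$. Define $$\rho=\sum_{\omega\in\Omega}p_\omega U_\omega\rho_0U_\omega^\dagger,\qquad \sigma=U_0\ket{\psi_0}\bra{\psi_0}U_0^\dagger .$$ Then $$D(\rho,\sigma)\le D(\rho_0,\ket{\psi_0}\bra{\psi_0})+2\Big\|\sum_{\omega}p_\omega U_\omega-U_0\Big\|+\sum_{\omega}p_\omega\|U_\omega-U_0\|^2,$$ i.e. $D(\rho,\sigma)\le D(\rho_0,\ket{\psi_0}\bra{\psi_0})+2\|E(U_\omega)-U_0\|+E(\|U_\omega-U_0\|^2)$, where $E$ denotes expectation with respect to $\{p_\omega\}$.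
   Context: $D(A,B)={\rm Tr}|A-B|$ denotes the trace distance between operators $A,B$ (with $|X|=\sqrt{X^\dagger X}$), and $\|\cdot\|$ denotes the operator norm. *)

(* Defs.v *)
From HB Require Import structures.
From mathcomp Require Import all_boot all_order all_algebra.
From mathcomp Require Import complex.
From mathcomp Require Import boolp classical_sets reals.
Set Implicit Arguments. Unset Strict Implicit. Unset Printing Implicit Defensive.
Import Order.TTheory GRing.Theory Num.Theory.
Local Open Scope ring_scope.
Local Open Scope complex_scope.

Section QDefs.
Variable R : realType.
Local Notation C := R[i].

Definition adj (m k : nat) (A : 'M[C]_(m, k)) : 'M[C]_(k, m) :=
  (map_mx (@conjc R) A)^T.

Definition unitary (n : nat) (U : 'M[C]_n) : Prop :=
  U *m adj U = 1%:M /\ adj U *m U = 1%:M.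

Definition psd (n : nat) (S : 'M[C]_n) : Prop :=
  adj S = S /\ forall v : 'cV[C]_n, 0 <= (adj v *m S *m v) 0 0.

Definition density (n : nat) (rho : 'M[C]_n) : Prop :=
  psd rho /\ \tr rho = 1.

Definition msqrt (n : nat) (A : 'M[C]_n) : 'M[C]_n :=
  xget 0 [set S | psd S /\ S *m S = A].

Definition mabs (n : nat) (X : 'M[C]_n) : 'M[C]_n := msqrt (adj X *m X).

Definition trdist (n : nat) (A B : 'M[C]_n) : R := complex.Re (\tr (mabs (A - B))).

Definition vnorm (n : nat) (v : 'cV[C]_n) : R :=
  Num.sqrt (\sum_i (Normc.normc (v i 0)) ^+ 2).

Definition opnorm (n : nat) (A : 'M[C]_n) : R :=
  sup [set vnorm (A *m v) | v in [set v : 'cV[C]_n | vnorm v = 1]].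

End QDefs.

(* Main.v *)
Require Import Defs.
From HB Require Import structures.
From mathcomp Require Import all_boot all_order all_algebra.
From mathcomp Require Import complex.
From mathcomp Require Import boolp classical_sets reals.
From mathcomp Require Import spectral.
From mathcomp Require Import ring lra.
Import Order.TTheory GRing.Theory Num.Theory.
Local Open Scope ring_scope.
Local Open Scope complex_scope.
Local Open Scope sesquilinear_scope.

Set Implicit Arguments.
Unset Strict Implicit.
Unset Printing Implicit Defensive.

Section Helpers.
Variable R : realType.
Local Notation C := R[i].
Local Notation nc := (@Normc.normc R).
Local Notation Re := (@complex.Re R).

Lemma adjE m k (A : 'M[C]_(m, k)) i j : adj A i j = conjc (A j i).
Proof. by rewrite /adj !mxE. Qed.

Lemma adj_mul m k l (A : 'M[C]_(m, k)) (B : 'M[C]_(k, l)) :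
  adj (A *m B) = adj B *m adj A.
Proof.
apply/matrixP=> i j; rewrite !mxE rmorph_sum; apply: eq_bigr => h _.
by rewrite !mxE rmorphM mulrC.
Qed.

Lemma adjD m k (A B : 'M[C]_(m, k)) : adj (A + B) = adj A + adj B.
Proof. by apply/matrixP=> i j; rewrite !mxE rmorphD. Qed.

Lemma adjN m k (A : 'M[C]_(m, k)) : adj (- A) = - adj A.
Proof. by apply/matrixP=> i j; rewrite !mxE rmorphN. Qed.

Lemma adjB m k (A B : 'M[C]_(m, k)) : adj (A - B) = adj A - adj B.
Proof. by rewrite adjD adjN. Qed.

Lemma adjK m k (A : 'M[C]_(m, k)) : adj (adj A) = A.
Proof. by apply/matrixP=> i j; rewrite !mxE conjcK. Qed.

Lemma adjZ m k (c : C) (A : 'M[C]_(m, k)) : adj (c *: A) = conjc c *: adj A.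
Proof. by apply/matrixP=> i j; rewrite !mxE rmorphM. Qed.

Lemma adj_sum m k (I : finType) (F : I -> 'M[C]_(m, k)) :
  adj (\sum_i F i) = \sum_i adj (F i).
Proof.
apply/matrixP=> i j; rewrite !mxE !summxE rmorph_sum; apply: eq_bigr => h _.
by rewrite !mxE.
Qed.

Lemma adj1 k : adj (1%:M : 'M[C]_k) = 1%:M.
Proof. by apply/matrixP=> i j; rewrite !mxE rmorph_nat eq_sym. Qed.

Lemma adj_tstar m k (A : 'M[C]_(m, k)) : adj A = A ^t*.
Proof. by apply/matrixP=> i j; rewrite !mxE. Qed.


Lemma nc_ge0 (z : C) : 0 <= nc z.
Proof. by case: z => a b; rewrite /Normc.normc sqrtr_ge0. Qed.

Lemma ncC (z : C) : (nc z)%:C = `|z|.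
Proof. by case: z => a b; rewrite normc_def. Qed.

Lemma nc2C (z : C) : ((nc z) ^+ 2)%:C = z * conjc z.
Proof. by rewrite rmorphXn /= ncC sqr_normc. Qed.

Lemma nc2Cr (z : C) : ((nc z) ^+ 2)%:C = conjc z * z.
Proof. by rewrite nc2C mulrC. Qed.

Lemma ncJ (z : C) : nc (conjc z) = nc z.
Proof. by apply: complexI; rewrite !ncC normcJ. Qed.

Lemma ncM (x y : C) : nc (x * y) = nc x * nc y.
Proof. exact: Normc.normcM. Qed.

Lemma nc_sum (I : finType) (F : I -> C) : nc (\sum_i F i) <= \sum_i nc (F i).
Proof.
apply: (big_ind2 (fun x y => nc x <= y)).
- by rewrite Normc.normc0.
- by move=> x1 y1 x2 y2 h1 h2; apply: le_trans (le_normcD _ _) (lerD h1 h2).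
- by [].
Qed.

Lemma Re_le_nc (z : C) : Re z <= nc z.
Proof.
have := normc_ge_Re z; rewrite -ncC lecR; exact: le_trans (ler_norm _).
Qed.

Lemma ge0C (z : C) : 0 <= z -> z = (Re z)%:C /\ 0 <= Re z.
Proof.
case: z => a b; rewrite lecE /= => /andP[/eqP-> ha]; split => //.
Qed.

Lemma nc_real (r : R) : nc r%:C = `|r|.
Proof. by apply: complexI; rewrite ncC normc_def /= expr0n /= addr0 sqrtr_sqr. Qed.

Lemma sum_sq_eq0 (I : finType) (a : I -> R) : \sum_i a i ^+ 2 = 0 -> forall i, a i = 0.
Proof.
move=> h i; apply/eqP; rewrite -sqrf_eq0; apply/eqP.
move/eqP: h; rewrite psumr_eq0 => [/allP/(_ i (mem_index_enum _))/implyP/(_ isT)/eqP//|].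
by move=> j _; rewrite sqr_ge0.
Qed.

Lemma CS_sq (I : finType) (a b : I -> R) :
  (\sum_i a i * b i) ^+ 2 <= (\sum_i a i ^+ 2) * (\sum_i b i ^+ 2).
Proof.
set s := \sum_i a i * b i; set A2 := \sum_i a i ^+ 2; set B2 := \sum_i b i ^+ 2.
have B2ge0 : 0 <= B2 by rewrite sumr_ge0 // => i _; rewrite sqr_ge0.
have [B0|Bpos] := eqVneq B2 0.
  have hb := sum_sq_eq0 B0.
  rewrite /s big1 ?expr0n ?B0 ?mulr0 // => i _; by rewrite hb mulr0.
have Bgt0 : 0 < B2 by rewrite lt_def Bpos B2ge0.
have key : 0 <= \sum_i (B2 * a i - s * b i) ^+ 2 by rewrite sumr_ge0 // => i _; rewrite sqr_ge0.
have E : \sum_i (B2 * a i - s * b i) ^+ 2 = B2 * (B2 * A2 - s ^+ 2).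
  under eq_bigr => i _ do rewrite sqrrB !exprMn.
  rewrite big_split /= sumrB -!mulr_sumr sumrMnl.
  have -> : \sum_i (B2 * a i * (s * b i)) = B2 * s * s.
    by rewrite /s [X in _ = X]mulr_sumr; apply: eq_bigr => i _; ring.
  rewrite -/A2 -/B2; ring.
rewrite E in key; rewrite mulrC -subr_ge0.
by move: key; rewrite pmulr_rge0.
Qed.

Lemma CS (I : finType) (a b : I -> R) :
  (forall i, 0 <= a i) -> (forall i, 0 <= b i) ->
  \sum_i a i * b i <= Num.sqrt (\sum_i a i ^+ 2) * Num.sqrt (\sum_i b i ^+ 2).
Proof.
move=> ha hb; rewrite -sqrtrM; last by rewrite sumr_ge0 // => i _; rewrite sqr_ge0.
have s0 : 0 <= \sum_i a i * b i by rewrite sumr_ge0 // => i _; rewrite mulr_ge0.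
rewrite -(ger0_norm s0) -sqrtr_sqr.
by rewrite ler_sqrt ?CS_sq // mulr_ge0 // sumr_ge0 // => i _; rewrite sqr_ge0.
Qed.


Lemma CSc (I : finType) (a b : I -> C) :
  nc (\sum_j a j * b j) <=
  Num.sqrt (\sum_j nc (a j) ^+ 2) * Num.sqrt (\sum_j nc (b j) ^+ 2).
Proof.
apply: le_trans (nc_sum _) _.
under eq_bigr => j _ do rewrite ncM.
by apply: CS => j; apply: nc_ge0.
Qed.

Lemma vnorm_ge0 n (v : 'cV[C]_n) : 0 <= vnorm v.
Proof. exact: sqrtr_ge0. Qed.

Lemma adjMM_diag m k (M : 'M[C]_(m, k)) i :
  (adj M *m M) i i = (\sum_j nc (M j i) ^+ 2)%:C.
Proof.
rewrite mxE rmorph_sum; apply: eq_bigr => j _.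
by rewrite adjE; symmetry; apply: nc2Cr.
Qed.

Lemma MMadj_diag m k (M : 'M[C]_(m, k)) i :
  (M *m adj M) i i = (\sum_j nc (M i j) ^+ 2)%:C.
Proof.
rewrite mxE rmorph_sum; apply: eq_bigr => j _.
by rewrite adjE; symmetry; apply: nc2C.
Qed.

Lemma vsum2C n (v : 'cV[C]_n) : (\sum_i nc (v i 0) ^+ 2)%:C = (adj v *m v) 0 0.
Proof. by rewrite adjMM_diag. Qed.

Lemma vnorm_sq n (v : 'cV[C]_n) : vnorm v ^+ 2 = \sum_i nc (v i 0) ^+ 2.
Proof. by rewrite /vnorm sqr_sqrtr // sumr_ge0 // => i _; rewrite sqr_ge0. Qed.

Lemma vnorm_unitary n (W : 'M[C]_n) (v : 'cV[C]_n) :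
  adj W *m W = 1%:M -> vnorm (W *m v) = vnorm v.
Proof.
move=> hW; rewrite /vnorm; congr (Num.sqrt _); apply: complexI.
by rewrite !vsum2C adj_mul -mulmxA [adj W *m _]mulmxA hW mul1mx.
Qed.

Lemma CSv n (x y : 'cV[C]_n) : nc ((adj x *m y) 0 0) <= vnorm x * vnorm y.
Proof.
rewrite mxE; under eq_bigr => j _ do rewrite adjE.
apply: le_trans (CSc _ _) _; rewrite /vnorm.
by under eq_bigr => j _ do rewrite ncJ.
Qed.

Lemma opnorm_ub n (A : 'M[C]_n) (v : 'cV[C]_n) :
  vnorm v = 1 -> vnorm (A *m v) <= opnorm A.
Proof.
move=> hv; apply: ub_le_sup; last by exists v.
pose r i := Num.sqrt (\sum_j nc (A i j) ^+ 2).
exists (Num.sqrt (\sum_i r i ^+ 2)) => _ [w hw <-].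
rewrite /vnorm ler_sqrt; last by rewrite sumr_ge0 // => i _; rewrite sqr_ge0.
apply: ler_sum => i _; rewrite ler_sqr.
rewrite mxE; apply: le_trans (CSc _ _) _.
- by move: hw; rewrite /vnorm => ->; rewrite mulr1.
- by rewrite nnegrE nc_ge0.
- by rewrite nnegrE sqrtr_ge0.
Qed.


Lemma unitary_sym n (V : 'M[C]_n) : V *m adj V = 1%:M -> adj V *m V = 1%:M.
Proof. exact: mulmx1C. Qed.

Lemma herm_spec n (B : 'M[C]_n) : adj B = B ->
  exists V : 'M[C]_n, exists d : 'rV[C]_n,
    [/\ adj V *m V = 1%:M, V *m adj V = 1%:M & B = adj V *m diag_mx d *m V].
Proof.
move=> hB.
have Bn : B \is normalmx by apply/normalmxP; rewrite -adj_tstar hB.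
have E : B = invmx (spectralmx B) *m diag_mx (spectral_diag B) *m spectralmx B by exact/orthomx_spectralP.
have Vu := spectral_unitarymx B.
have VV : spectralmx B *m adj (spectralmx B) = 1%:M.
  rewrite adj_tstar; exact/unitarymxP.
exists (spectralmx B), (spectral_diag B); split.
- exact: unitary_sym.
- exact: VV.
- apply: (etrans E); congr (_ *m _ *m _).
  by rewrite (invmx_unitary Vu) adj_tstar.
Qed.

Lemma diag_entry n (B V : 'M[C]_n) d :
  B = adj V *m diag_mx d *m V -> V *m adj V = 1%:M -> V *m B *m adj V = diag_mx d.
Proof.
move=> -> VV.
by rewrite mulmxA mulmxA VV mul1mx -mulmxA VV mulmx1.
Qed.

Lemma conj_entry n (A B : 'M[C]_n) i :
  (A *m B *m adj A) i i = (adj (adj (row i A)) *m B *m adj (row i A)) 0 0.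
Proof.
rewrite adjK !mxE; apply: eq_bigr => k _; rewrite !mxE; congr (_ * _).
by apply: eq_bigr => l _; rewrite !mxE.
Qed.

Lemma diag_mxE n (d : 'rV[C]_n) i : diag_mx d i i = d 0 i.
Proof. by rewrite mxE eqxx mulr1n. Qed.


Lemma psd_spec n (S : 'M[C]_n) : psd S ->
  exists V : 'M[C]_n, exists r : 'I_n -> R,
    [/\ adj V *m V = 1%:M, V *m adj V = 1%:M,
        S = adj V *m diag_mx (\row_i (r i)%:C) *m V & forall i, 0 <= r i].
Proof.
move=> [hS hq]; have [V [d [VV1 VV2 E]]] := herm_spec hS.
have dge0 : forall i, 0 <= d 0 i.
  move=> i; rewrite -diag_mxE -(diag_entry E VV2) conj_entry; exact: hq.
have dE : d = \row_i (Re (d 0 i))%:C.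
  apply/rowP => i; rewrite mxE; have [h _] := ge0C (dge0 i); exact: h.
exists V, (fun i => Re (d 0 i)); split => //.
- by rewrite -dE.
- by move=> i; have [_ h] := ge0C (dge0 i).
Qed.


Lemma adj_diag_real n (f : 'I_n -> R) :
  adj (diag_mx (\row_i (f i)%:C)) = diag_mx (\row_i (f i)%:C).
Proof.
apply/matrixP => i j; rewrite !mxE eq_sym.
case: eqP => [->|_]; rewrite ?mulr1n ?mulr0n ?conjc_real ?conjc0 //.
Qed.

Lemma quad_diag n (f : 'I_n -> R) (w : 'cV[C]_n) :
  (adj w *m diag_mx (\row_i (f i)%:C) *m w) 0 0 =
  (\sum_i nc (w i 0) ^+ 2 * f i)%:C.
Proof.
rewrite mul_mx_diag !mxE rmorph_sum; apply: eq_bigr => i _.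
rewrite !mxE rmorphM /= mulrAC; congr (_ * _).
by symmetry; exact: nc2Cr.
Qed.


Lemma sqrt_exists n (X : 'M[C]_n) : exists S, psd S /\ S *m S = adj X *m X.
Proof.
have hB : adj (adj X *m X) = adj X *m X by rewrite adj_mul adjK.
have [V [d [VV1 VV2 E]]] := herm_spec hB.
have dge0 : forall i, 0 <= d 0 i.
  move=> i; rewrite -diag_mxE -(diag_entry E VV2).
  have -> : V *m (adj X *m X) *m adj V = adj (X *m adj V) *m (X *m adj V).
    by rewrite adj_mul adjK !mulmxA.
  rewrite adjMM_diag ler0c.
  by rewrite sumr_ge0 // => j _; rewrite sqr_ge0.
pose r i := Re (d 0 i).
have dE : d = \row_i (r i)%:C.
  apply/rowP => i; rewrite mxE; have [h _] := ge0C (dge0 i); exact: h.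
have r0 : forall i, 0 <= r i by move=> i; have [_ h] := ge0C (dge0 i).
pose D := diag_mx (\row_i (Num.sqrt (r i))%:C).
exists (adj V *m D *m V); split; first split.
- by rewrite !adj_mul adjK adj_diag_real mulmxA.
- move=> v.
  have -> : adj v *m (adj V *m D *m V) *m v = adj (V *m v) *m D *m (V *m v).
    by rewrite adj_mul !mulmxA.
  rewrite quad_diag ler0c sumr_ge0 // => i _.
  by rewrite mulr_ge0 ?sqr_ge0 ?sqrtr_ge0.
- rewrite E dE.
  have -> : adj V *m D *m V *m (adj V *m D *m V) = adj V *m (D *m D) *m V.
    by rewrite -!mulmxA; congr (_ *m (_ *m _)); rewrite !mulmxA VV2 mul1mx.
  congr (_ *m _ *m _).
  apply/matrixP => i j; rewrite mul_diag_mx !mxE.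
  case: eqP => [->|_]; rewrite ?mulr1n ?mulr0n ?mulr0 //.
  by rewrite -rmorphM /= -expr2 sqr_sqrtr.
Qed.


Lemma mabs_spec n (X : 'M[C]_n) : psd (mabs X) /\ mabs X *m mabs X = adj X *m X.
Proof.
rewrite /mabs /msqrt; apply: (@xgetPex _ 0 [set S | psd S /\ S *m S = adj X *m X]).
exact: sqrt_exists.
Qed.

Lemma DD_entry n (r : 'I_n -> R) i :
  (diag_mx (\row_i (r i)%:C) *m diag_mx (\row_i (r i)%:C)) i i = ((r i) ^+ 2)%:C.
Proof. by rewrite mul_diag_mx !mxE eqxx mulr1n rmorphXn expr2. Qed.

Lemma tr_spec n (V : 'M[C]_n) (r : 'I_n -> R) :
  V *m adj V = 1%:M ->
  \tr (adj V *m diag_mx (\row_i (r i)%:C) *m V) = (\sum_i r i)%:C.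
Proof.
move=> VV; rewrite mxtrace_mulC mulmxA VV mul1mx mxtrace_diag rmorph_sum.
by apply: eq_bigr => i _; rewrite mxE.
Qed.

Lemma uK1 n (V B : 'M[C]_n) : V *m adj V = 1%:M -> V *m (adj V *m B) = B.
Proof. by move=> h; rewrite mulmxA h mul1mx. Qed.

Lemma uK2 n (V B : 'M[C]_n) : adj V *m V = 1%:M -> adj V *m (V *m B) = B.
Proof. by move=> h; rewrite mulmxA h mul1mx. Qed.

Lemma trace_bound n (X S W : 'M[C]_n) :
  psd S -> S *m S = adj X *m X -> W *m adj W = 1%:M ->
  nc (\tr (W *m X)) <= Re (\tr S).
Proof.
move=> hS hSS hW.
have [V [r [VV1 VV2 E r0]]] := psd_spec hS.
set D := diag_mx _ in E.
pose Z := V *m X *m adj V; pose W' := V *m W *m adj V.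
have trE : \tr (W *m X) = \tr (W' *m Z).
  rewrite /W' /Z.
  have -> : V *m W *m adj V *m (V *m X *m adj V) = V *m (W *m X *m adj V).
    rewrite -!mulmxA; congr (_ *m (_ *m _)); rewrite !mulmxA VV1 mul1mx //.
  by rewrite [RHS]mxtrace_mulC -!mulmxA VV1 mulmx1.
have hZ : adj Z *m Z = D *m D.
  have -> : adj Z *m Z = V *m (S *m S) *m adj V.
    by rewrite hSS /Z !adj_mul adjK -!mulmxA (uK2 _ VV1).
  by rewrite E -!mulmxA !(uK1 _ VV2) VV2 mulmx1.
have hW' : W' *m adj W' = 1%:M.
  rewrite /W' !adj_mul adjK -!mulmxA (uK2 _ VV1).
  by rewrite [W *m (adj W *m _)]mulmxA hW mul1mx VV2.
have rowW : forall i, \sum_j nc (W' i j) ^+ 2 = 1.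
  move=> i; apply: complexI; rewrite -MMadj_diag hW' mxE eqxx //.
have colZ : forall i, \sum_j nc (Z j i) ^+ 2 = r i ^+ 2.
  move=> i; apply: complexI; rewrite -adjMM_diag hZ /D DD_entry //.
rewrite trE E tr_spec // /= /mxtrace.
apply: le_trans (nc_sum _) _; apply: ler_sum => i _.
rewrite mxE; apply: le_trans (CSc _ _) _.
by rewrite rowW colZ sqrtr1 mul1r sqrtr_sqr ger0_norm.
Qed.


Lemma tr_witness n (X S : 'M[C]_n) :
  adj X = X -> psd S -> S *m S = adj X *m X ->
  exists J, unitary J /\ \tr (J *m X) = \tr S.
Proof.
move=> hX hS hSS.
have [V [r [VV1 VV2 E r0]]] := psd_spec hS.
set D := diag_mx _ in E.
pose Z := V *m X *m adj V.
have hZh : adj Z = Z by rewrite /Z !adj_mul adjK hX mulmxA.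
have hZ : Z *m Z = D *m D.
  rewrite -{1}hZh.
  have -> : adj Z *m Z = V *m (S *m S) *m adj V.
    by rewrite hSS /Z !adj_mul adjK -!mulmxA (uK2 _ VV1).
  by rewrite E -!mulmxA !(uK1 _ VV2) VV2 mulmx1.
have Zdef : Z = V *m X *m adj V by [].
clearbody Z.
pose q i := if r i == 0 then 0 else (r i)^-1.
pose e i : R := if r i == 0 then 1 else 0.
pose Q := diag_mx (\row_i (q i)%:C).
pose Ed := diag_mx (\row_i (e i)%:C).
have rowZ : forall i, \sum_j nc (Z i j) ^+ 2 = r i ^+ 2.
  move=> i; apply: complexI; rewrite -MMadj_diag hZh hZ /D DD_entry //.
have Z0 : forall i j, r i = 0 -> Z i j = 0 /\ Z j i = 0.
  move=> i j ri; have h := rowZ i; rewrite ri expr0n /= in h.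
  have zij : Z i j = 0 by apply: Normc.eq0_normc; apply: (sum_sq_eq0 h).
  split => //; have : adj Z j i = Z j i by rewrite hZh.
  by rewrite adjE zij conjc0 => <-.
have EZ : Ed *m Z = 0.
  apply/matrixP => i j; rewrite mul_diag_mx !mxE /e.
  by case: eqP => [ri|_]; rewrite ?mul0r // (Z0 i j ri).1 mulr0.
have ZE : Z *m Ed = 0.
  apply/matrixP => i j; rewrite mul_mx_diag !mxE /e.
  by case: eqP => [rj|_]; rewrite ?mulr0 // (Z0 j i rj).2 mul0r.
pose J' := Q *m Z + Ed.
have J'J' : J' *m adj J' = 1%:M.
  have hQ : adj Q = Q by apply: adj_diag_real.
  have hE : adj Ed = Ed by apply: adj_diag_real.
  rewrite /J' adjD adj_mul hZh hQ hE mulmxDl !mulmxDr -!mulmxA.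
  rewrite ZE mulmx0 [_ + 0]addr0 [Ed *m (Z *m Q)]mulmxA EZ mul0mx [0 + _]add0r.
  rewrite [Z *m (Z *m Q)]mulmxA hZ /Q /Ed /D !mulmx_diag.
  apply/matrixP => i j; rewrite !mxE -mulrnDl; congr (_ *+ _).
  rewrite -!rmorphM -rmorphD /q /e; case: eqP => [->|ri] /=.
    by rewrite !mul0r add0r mulr1.
  have ri' : r i != 0 by apply/eqP.
  by rewrite mulr0 addr0 mulfK // mulVf.
have J'u : unitary J' by split => //; exact: unitary_sym.
exists (adj V *m J' *m V); split.
- have h : adj V *m J' *m V *m adj (adj V *m J' *m V) = 1%:M.
    by rewrite !adj_mul adjK -!mulmxA (uK1 _ VV2) [J' *m (_ *m _)]mulmxA J'J' mul1mx VV1.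
  by split => //; exact: unitary_sym.
- rewrite E tr_spec //.
  have -> : \tr (adj V *m J' *m V *m X) = \tr (J' *m Z).
    by rewrite Zdef -!mulmxA [LHS]mxtrace_mulC -!mulmxA.
  rewrite /J' mulmxDl -mulmxA hZ EZ [_ + 0]addr0 /Q /D !mulmx_diag mxtrace_diag.
  rewrite rmorph_sum; apply: eq_bigr => i _; rewrite !mxE.
  rewrite -!rmorphM /q; case: eqP => [->|ri] /=; first by rewrite mul0r.
  have ri' : r i != 0 by apply/eqP.
  by rewrite mulrA mulVf // mul1r.
Qed.


Lemma ReD (x y : C) : Re (x + y) = Re x + Re y.
Proof. by case: x => a b; case: y. Qed.

Lemma ReN (x : C) : Re (- x) = - Re x.
Proof. by case: x. Qed.

Lemma ReB (x y : C) : Re (x - y) = Re x - Re y.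
Proof. by rewrite ReD ReN. Qed.

Lemma Re_sum (I : finType) (F : I -> C) : Re (\sum_i F i) = \sum_i Re (F i).
Proof. exact: (big_morph _ ReD). Qed.

Lemma ReMr (r : R) (z : C) : Re (r%:C * z) = r * Re z.
Proof. by case: z => a b /=; rewrite mul0r subr0. Qed.

Lemma mxaddE m k (A B : 'M[C]_(m, k)) i j : (A + B) i j = A i j + B i j.
Proof. by rewrite mxE. Qed.

Lemma mxscaleE m k c (A : 'M[C]_(m, k)) i j : (c *: A) i j = c * A i j.
Proof. by rewrite mxE. Qed.

Definition hq n (J : 'M[C]_n) (v : 'cV[C]_n) := (adj v *m (J *m v)) 0 0.

Lemma quad_expand (Om : finType) n (p : Om -> R) (J : 'M[C]_n)
  (a : 'cV[C]_n) (b : Om -> 'cV[C]_n) :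
  \sum_w p w = 1 ->
  \sum_w (p w)%:C * hq J (a + b w) - hq J a =
  (adj (\sum_w (p w)%:C *: b w) *m (J *m a)) 0 0
  + (adj a *m (J *m (\sum_w (p w)%:C *: b w))) 0 0
  + \sum_w (p w)%:C * hq J (b w).
Proof.
move=> hs.
have e : forall w, hq J (a + b w) =
   hq J a + (adj (b w) *m (J *m a)) 0 0 + (adj a *m (J *m b w)) 0 0 + hq J (b w).
  move=> w; rewrite /hq adjD !mulmxDr !mulmxDl !mxaddE.
  by rewrite !addrA.
under eq_bigr => w _ do rewrite e !mulrDr.
rewrite !big_split /= -mulr_suml -rmorph_sum hs rmorph1 mul1r.
have hx : (adj (\sum_w (p w)%:C *: b w) *m (J *m a)) 0 0 =
    \sum_w (p w)%:C * (adj (b w) *m (J *m a)) 0 0.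
  rewrite adj_sum mulmx_suml summxE; apply: eq_bigr => w _.
  by rewrite adjZ conjc_real -scalemxAl mxscaleE.
have hy : (adj a *m (J *m (\sum_w (p w)%:C *: b w))) 0 0 =
    \sum_w (p w)%:C * (adj a *m (J *m b w)) 0 0.
  rewrite mulmx_sumr mulmx_sumr summxE; apply: eq_bigr => w _.
  by rewrite -scalemxAr -scalemxAr mxscaleE.
rewrite hx hy; ring.
Qed.


Lemma tr_rank1 n (J M : 'M[C]_n) (psi : 'cV[C]_n) :
  \tr (J *m (M *m (psi *m adj psi) *m adj M)) = hq J (M *m psi).
Proof.
have -> : J *m (M *m (psi *m adj psi) *m adj M) = (J *m (M *m psi)) *m adj (M *m psi).
  by rewrite adj_mul !mulmxA.
by rewrite mxtrace_mulC /mxtrace big_ord1.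
Qed.

Lemma hq_bound n (J : 'M[C]_n) (x : 'cV[C]_n) :
  adj J *m J = 1%:M -> nc (hq J x) <= vnorm x ^+ 2.
Proof.
move=> hJ; rewrite /hq; apply: le_trans (CSv _ _) _.
by rewrite vnorm_unitary // expr2.
Qed.

End Helpers.

Theorem lemma1 (R : realType) (n : nat) (Omega : finType)
  (p : Omega -> R) (U0 : 'M[R[i]]_n) (U : Omega -> 'M[R[i]]_n)
  (psi0 : 'cV[R[i]]_n) (rho0 : 'M[R[i]]_n) :
  (forall w, 0 <= p w) -> \sum_w p w = 1 ->
  unitary U0 -> (forall w, unitary (U w)) ->
  vnorm psi0 = 1 -> density rho0 ->
  let rho := \sum_w (p w)%:C *: (U w *m rho0 *m adj (U w)) in
  let sigma := U0 *m (psi0 *m adj psi0) *m adj U0 in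
  trdist rho sigma <=
    trdist rho0 (psi0 *m adj psi0)
    + 2 * opnorm (\sum_w (p w)%:C *: U w - U0)
    + \sum_w p w * opnorm (U w - U0) ^+ 2.
Proof.
move=> hp hs hU0 hU hpsi hrho0; cbv zeta.
set rho := \sum_w _.
set sigma := U0 *m _ *m adj U0.
have [hU01 hU02] : _ /\ _ := hU0.
have adjrho0 : adj rho0 = rho0 by move: hrho0; rewrite /density /psd => -[[]].
set P := psi0 *m adj psi0.
set G := \sum_w (p w)%:C *: U w - U0.
have adjP : adj P = P by rewrite /P adj_mul adjK.
have hX : adj (rho - sigma) = rho - sigma.
  rewrite adjB /rho /sigma adj_sum !adj_mul !adjK ?adjP !mulmxA; congr (_ - _).
  apply: eq_bigr => w _; rewrite adjZ conjc_real !adj_mul !adjK adjrho0 mulmxA //.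
have [hS hSS] := mabs_spec (rho - sigma).
have [J [[J1 J2] hJ]] := tr_witness hX hS hSS.
have [hT hTT] := mabs_spec (rho0 - P).
rewrite /trdist -hJ.
set a := U0 *m psi0.
pose b w := (U w - U0) *m psi0.
have hUw : forall w, U w *m psi0 = a + b w.
  by move=> w; rewrite /b mulmxBl addrC subrK.
have hc : \sum_w (p w)%:C *: b w = G *m psi0.
  rewrite /G mulmxBl mulmx_suml.
  under eq_bigr => w _ do rewrite /b mulmxBl scalerBr.
  rewrite sumrB; congr (_ - _).
    by apply: eq_bigr => w _; rewrite scalemxAl.
  by rewrite -scaler_suml -rmorph_sum hs rmorph1 scale1r.
have E1 : \tr (J *m (rho - sigma)) =
    \sum_w (p w)%:C * \tr ((adj (U w) *m J *m U w) *m (rho0 - P))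
    + (\sum_w (p w)%:C * hq J (U w *m psi0) - hq J (U0 *m psi0)).
  have hw : forall w, \tr (J *m (U w *m rho0 *m adj (U w))) =
      \tr (adj (U w) *m J *m U w *m (rho0 - P)) + hq J (U w *m psi0).
    move=> w.
    have -> : \tr (adj (U w) *m J *m U w *m (rho0 - P)) =
        \tr (J *m (U w *m (rho0 - P) *m adj (U w))).
      by rewrite -!mulmxA mxtrace_mulC -!mulmxA.
    by rewrite -tr_rank1 -mxtraceD -mulmxDr -mulmxDl -mulmxDr subrK.
  rewrite mulmxBr linearB /= /rho mulmx_sumr raddf_sum /= /sigma tr_rank1.
  rewrite addrA; congr (_ - _).
  rewrite -big_split /=; apply: eq_bigr => w _.
  by rewrite -scalemxAr mxtraceZ hw mulrDr.
have E2 : \sum_w (p w)%:C * hq J (U w *m psi0) = \sum_w (p w)%:C * hq J (a + b w).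
  by apply: eq_bigr => w _; rewrite hUw.
rewrite E1 E2.
have ReM : forall (r : R) (z : R[i]), complex.Re (r%:C * z) = r * complex.Re z.
  by move=> r [x y] /=; rewrite mul0r subr0.
rewrite quad_expand // hc ReD !ReD !Re_sum.
rewrite (eq_bigr (fun w => p w * complex.Re (\tr (adj (U w) *m J *m U w *m (rho0 - P))))); last first.
  move=> w _; case: (\tr _) => x y /=.
  by rewrite mul0r subr0.
have E3 : \sum_w complex.Re ((p w)%:C * hq J (b w)) = \sum_w p w * complex.Re (hq J (b w)).
  by apply: eq_bigr => w _; case: (hq J (b w)) => x y /=; rewrite mul0r subr0.
rewrite E3.
have trT : complex.Re (\tr (mabs (rho0 - P))) = \sum_i complex.Re (mabs (rho0 - P) i i).
  by rewrite /mxtrace Re_sum.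
rewrite -trT.
have va : vnorm a = 1 by rewrite /a vnorm_unitary.
have vG : vnorm (G *m psi0) <= opnorm G by apply: opnorm_ub.
have B1 : forall w, complex.Re (\tr (adj (U w) *m J *m U w *m (rho0 - P)))
    <= complex.Re (\tr (mabs (rho0 - P))).
  move=> w; apply: le_trans (Re_le_nc _) _; apply: trace_bound => //.
  have [hw1 hw2] : _ /\ _ := hU w.
  by rewrite !adj_mul adjK -!mulmxA (uK1 _ hw1) [J *m (_ *m _)]mulmxA J1 mul1mx hw2.
have B1s : \sum_w p w * complex.Re (\tr (adj (U w) *m J *m U w *m (rho0 - P)))
    <= complex.Re (\tr (mabs (rho0 - P))).
  apply: le_trans (ler_sum _ (fun w _ => ler_wpM2l (hp w) (B1 w))) _.
  by rewrite -mulr_suml hs mul1r.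
have B2 : complex.Re ((adj (G *m psi0) *m (J *m a)) 0 0) <= opnorm G.
  apply: le_trans (Re_le_nc _) _; apply: le_trans (CSv _ _) _.
  by rewrite [vnorm (J *m _)]vnorm_unitary // va mulr1.
have B3 : complex.Re ((adj a *m (J *m (G *m psi0))) 0 0) <= opnorm G.
  apply: le_trans (Re_le_nc _) _; apply: le_trans (CSv _ _) _.
  by rewrite [vnorm (J *m _)]vnorm_unitary // va mul1r.
have B4 : \sum_w p w * complex.Re (hq J (b w)) <= \sum_w p w * opnorm (U w - U0) ^+ 2.
  apply: ler_sum => w _; apply: (ler_wpM2l (hp w)).
  apply: le_trans (Re_le_nc _) _; apply: le_trans (hq_bound _ J2) _.
  have hb : vnorm (b w) <= opnorm (U w - U0) by apply: opnorm_ub.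
  by rewrite !expr2; apply: ler_pM => //; apply: vnorm_ge0.
lra.
Qed.
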